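(* Let $n$ be a positive integer, $S\subseteq S_n$ a subset containing the identity, $G$ the subgroup generated by $S$, $p\ne q$ primes, and $c\in G$ an element of order $p$. Call a configuration $x\in\mathbb{Z}_q^n$ semi-homogeneous if for every $g\in G$ the coordinates $x_{g(1)},x_{gc(1)},x_{gc^2(1)},\dots,x_{gc^{p-1}(1)}$ are all equal. If $x$ is not semi-homogeneous, then there is no move $y\in\mathbb{Z}_q^n$ such that for every $\sigma\in S$ the configuration $x'+y$ is semi-homogeneous, where $x'$ is defined by $x'_{\sigma(i)}=x_i$.
   Context: Permutations in $S_n$ are composed as functions, $(gh)(i)=g(h(i))$. *)

(* Defs.v *)
From mathcomp Require Import all_boot all_algebra all_fingroup.
Set Implicit Arguments. Unset Strict Implicit. Unset Printing Implicit Defensive.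
Import GRing.Theory.
Local Open Scope group_scope.

(* Points are 'I_n (0-based), so the paper's point 1 is the ordinal 0 = Ordinal hn.
   Permutations are applied as functions: g ((c ^+ k) i0) is the paper's g c^k (1). *)
Definition semi_homogeneous (n q p : nat) (hn : (0 < n)%N) (G : {set 'S_n})
  (c : 'S_n) (x : 'I_n -> 'Z_q) : Prop :=
  forall g : 'S_n, g \in G -> forall k : nat, (k < p)%N ->
    x (g ((c ^+ k) (Ordinal hn))) = x (g (Ordinal hn)).

(* x' with x'_{sigma(i)} = x_i, i.e. x'_j = x_{sigma^-1(j)} *)
Definition perm_config (n q : nat) (sigma : 'S_n) (x : 'I_n -> 'Z_q) : 'I_n -> 'Z_q :=
  fun j => x ((sigma^-1)%g j).

(* Main.v *)
Require Import Defs.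
From mathcomp Require Import all_boot all_algebra all_fingroup.
From mathcomp Require Import ring.
Local Open Scope group_scope.
Import GRing.Theory.

Theorem mainTheorem11 (n : nat) (hn : (0 < n)%N) (S : {set 'S_n}) (p q : nat)
  (c : 'S_n) (x : 'I_n -> 'Z_q) :
  1 \in S -> prime p -> prime q -> p != q -> c \in <<S>> -> #[c] = p ->
  ~ semi_homogeneous p hn <<S>> c x ->
  ~ (exists y : 'I_n -> 'Z_q, forall sigma : 'S_n, sigma \in S ->
       semi_homogeneous p hn <<S>> c (fun j => (perm_config sigma x j + y j)%R)).
Proof.
move=> S1 pp pq pnq cG oc nSH [y Hy].
apply: nSH.
set i0 := Ordinal hn.
pose F (h : 'S_n) := (x (h (c i0)) - x (h i0))%R.
have p1 : (1 < p)%N by apply: prime_gt1.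
have inv : forall s, s \in S -> forall g, g \in <<S>> -> F (g * s^-1) = F g.
  move=> s sS g gG.
  have A := Hy s sS g gG 1%N p1.
  have B := Hy 1 S1 g gG 1%N p1.
  rewrite /perm_config /= expg1 invg1 !perm1 in A B.
  rewrite /F !permM -/i0 in A B *.
  move: A B; set X1 := x _; set Y1 := y _; set X2 := x _; set Y0 := y _.
  set X3 := x _; set X0 := x _ => A B.
  have A' : X1 = (X2 + Y0 - Y1)%R by rewrite -A addrK.
  have B' : X3 = (X0 + Y0 - Y1)%R by rewrite -B addrK.
  rewrite A' B'; ring.
pose K := <<S>> :&: [set t | [forall h in <<S>>, F (h * t) == F h]].
have gK : group_set K.
  apply/group_setP; split.
    rewrite inE group1 inE; apply/forall_inP => h _; by rewrite mulg1.
  move=> a b; rewrite !inE => /andP[aG /forall_inP Ha] /andP[bG /forall_inP Hb].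
  rewrite groupM //=; apply/forall_inP => h hG.
  rewrite mulgA (eqP (Hb _ _)) ?(eqP (Ha _ _)) //.
  exact: groupM.
have SK : <<S>> \subset Group gK.
  rewrite gen_subG; apply/subsetP => s sS.
  have sG : s \in <<S>> by apply: mem_gen.
  have : s^-1 \in Group gK.
    rewrite /= inE groupV sG inE; apply/forall_inP => h hG.
    by rewrite (inv s sS h hG).
  by rewrite groupV.
have FG : forall g, g \in <<S>> -> F g = F 1.
  move=> g gG; have := subsetP SK g gG; rewrite /= !inE => /andP[_ /forall_inP H].
  by have := eqP (H 1 (group1 _)); rewrite mul1g.
set a := F 1.
have step : forall j, x ((c ^+ j.+1)%g i0) = (x ((c ^+ j)%g i0) + a)%R.
  move=> j; rewrite /a -(FG (c ^+ j)) ?groupX // /F expgS permM.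
  by rewrite addrC subrK.
have lin : forall j, x ((c ^+ j)%g i0) = (x i0 + a *+ j)%R.
  elim=> [|j IH]; first by rewrite expg0 perm1 mulr0n addr0.
  rewrite step IH mulrS; ring.
have a0 : a = 0%R.
  have H : (a *+ p = 0)%R.
    have := lin p; rewrite -oc expg_order perm1 => E.
    by apply/eqP; rewrite -(inj_eq (addrI (x i0))) addr0 -E.
  have U : (p%:R : 'Z_q)%R \is a GRing.unit.
    rewrite unitZpE; last exact: prime_gt1.
    by rewrite prime_coprime // dvdn_prime2 // eq_sym.
  have H2 : (p%:R * a = 0 :> 'Z_q)%R by rewrite mulr_natl.
  have := congr1 (fun z => ((p%:R : 'Z_q)^-1 * z)%R) H2.
  by rewrite /= mulKr // mulr0.
have F0 : forall g, g \in <<S>> -> x (g (c i0)) = x (g i0).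
  move=> g gG; apply/eqP; rewrite -subr_eq0; apply/eqP.
  by rewrite -/(F g) FG.
move=> g gG; elim=> [|k IH] Hk; first by rewrite expg0 perm1.
rewrite expgS permM -permM F0 ?groupM ?groupX //.
by rewrite permM IH // ltnW.
Qed.
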